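(* Let $(\mathfrak{a},\alpha,\beta)$ and $(V,\alpha_{V_0},\beta_{V_1})$ be multiplicative Hom-Lie antialgebras and let $\rho=(\rho_0,\rho_1)$ be an action of $(\mathfrak{a},\alpha,\beta)$ on $(V,\alpha_{V_0},\beta_{V_1})$. Then the $\mathbb{Z}_2$-graded space $\mathfrak{a}\oplus V$ with even part $\mathfrak{a}_0\oplus V_0$ and odd part $\mathfrak{a}_1\oplus V_1$, with maps $(\alpha+\alpha_{V_0})(x,u)=(\alpha(x),\alpha_{V_0}(u))$, $(\beta+\beta_{V_1})(y,w)=(\beta(y),\beta_{V_1}(w))$ and products $(x_1,u_1)\cdot(x_2,u_2)=(x_1\cdot x_2,\ \rho_0(x_1)(u_2)+\rho_0(x_2)(u_1)+u_1\cdot u_2)$, $(x_1,u_1)\cdot(y_1,w_1)=(x_1\cdot y_1,\ \rho_0(x_1)(w_1)+\rho_1(y_1)(u_1)+u_1\cdot w_1)$, $[(y_1,w_1),(y_2,w_2)]=([y_1,y_2],\ \rho_1(y_1)(w_2)-\rho_1(y_2)(w_1)+[w_1,w_2])$ (for $x_i\in\mathfrak{a}_0$, $y_i\in\mathfrak{a}_1$, $u_i\in V_0$, $w_i\in V_1$), is a multiplicative Hom-Lie antialgebra (the semidirect product $\mathfrak{a}\ltimes V$).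
   Context: A Hom-Lie antialgebra $(\mathfrak{a},\alpha,\beta)$ is a supercommutative $\mathbb{Z}_2$-graded algebra $\mathfrak{a}=\mathfrak{a}_0\oplus\mathfrak{a}_1$ (even·even commutative, even·odd = odd·even, the product of two odd elements, written $[\cdot,\cdot]$, is skew-symmetric with values in $\mathfrak{a}_0$) with linear maps $\alpha:\mathfrak{a}_0\to\mathfrak{a}_0$, $\beta:\mathfrak{a}_1\to\mathfrak{a}_1$ such that for all $x_i\in\mathfrak{a}_0$, $y_i\in\mathfrak{a}_1$: $\alpha(x_1)\cdot(x_2\cdot x_3)=(x_1\cdot x_2)\cdot\alpha(x_3)$; $\alpha(x_1)\cdot(x_2\cdot y_1)=\tfrac12(x_1\cdot x_2)\cdot\beta(y_1)$; $\alpha(x_1)\cdot[y_1,y_2]=[x_1\cdot y_1,\beta(y_2)]+[\beta(y_1),x_1\cdot y_2]$; $\beta(y_1)\cdot[y_2,y_3]+\beta(y_2)\cdot[y_3,y_1]+\beta(y_3)\cdot[y_1,y_2]=0$. It is multiplicative if $\alpha(x_1\cdot x_2)=\alpha(x_1)\cdot\alpha(x_2)$, $\beta(x_1\cdot y_1)=\alpha(x_1)\cdot\beta(y_1)$, $\alpha([y_1,y_2])=[\beta(y_1),\beta(y_2)]$. The same notation ($\cdot$, $[\cdot,\cdot]$, $\alpha_{V_0},\beta_{V_1}$) is used for $V$. A representation of $\mathfrak{a}$ on $V$ is a pair of linear maps $\rho_0:\mathfrak{a}_0\to\operatorname{End}(V)_0=\operatorname{Hom}(V_0,V_0)\oplus\operatorname{Hom}(V_1,V_1)$,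 $\rho_1:\mathfrak{a}_1\to\operatorname{End}(V)_1=\operatorname{Hom}(V_0,V_1)\oplus\operatorname{Hom}(V_1,V_0)$ such that for all $x,x_1,x_2\in\mathfrak{a}_0$, $y,y_1,y_2\in\mathfrak{a}_1$, $u\in V_0$, $w\in V_1$: (R1) $\alpha_{V_0}(\rho_0(x)u)=\rho_0(\alpha(x))\alpha_{V_0}(u)$; (R2) $\beta_{V_1}(\rho_0(x)w)=\rho_0(\alpha(x))\beta_{V_1}(w)$; (R3) $\beta_{V_1}(\rho_1(y)u)=\rho_1(\beta(y))\alpha_{V_0}(u)$; (R4) $\alpha_{V_0}(\rho_1(y)w)=\rho_1(\beta(y))\beta_{V_1}(w)$; (R5) $\rho_0(\alpha(x_1))\rho_0(x_2)u=\rho_0(x_1\cdot x_2)\alpha_{V_0}(u)$; (R6) $\rho_0(\alpha(x_1))\rho_0(x_2)w=\tfrac12\rho_0(x_1\cdot x_2)\beta_{V_1}(w)$; (R7) $\rho_0(\alpha(x))\rho_1(y)u=\tfrac12\rho_1(\beta(y))\rho_0(x)u$; (R8) $\rho_1(x\cdot y)\alpha_{V_0}(u)=\tfrac12\rho_1(\beta(y))\rho_0(x)u$; (R9) $\rho_0(\alpha(x))\rho_1(y)w=\rho_1(x\cdot y)\beta_{V_1}(w)+\rho_1(\beta(y))\rho_0(x)w$; (R10) $\rho_0([y_1,y_2])\alpha_{V_0}(u)=\rho_1(\beta(y_1))\rho_1(y_2)u-\rho_1(\beta(y_2))\rho_1(y_1)u$; (R11) $\rho_0([y_1,y_2])\beta_{V_1}(w)=-\rho_1(\beta(y_1))\rho_1(y_2)w+\rho_1(\beta(y_2))\rho_1(y_1)w$.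 An action of $\mathfrak{a}$ on $V$ is a representation $\rho$ such that for all $x\in\mathfrak{a}_0$, $y\in\mathfrak{a}_1$, $u,u_1,u_2\in V_0$, $w,w_1,w_2\in V_1$: (A1) $\rho_0(\alpha(x))(u_1\cdot u_2)=\rho_0(x)(u_1)\cdot\alpha_{V_0}(u_2)$; (A2) $\rho_0(\alpha(x))(u\cdot w)=\tfrac12\rho_0(x)(u)\cdot\beta_{V_1}(w)$; (A3) $\rho_1(y)(u_2)\cdot\alpha_{V_0}(u_1)=\tfrac12\rho_1(\beta(y))(u_1\cdot u_2)$; (A4) $\rho_0(x)(w)\cdot\alpha_{V_0}(u)=\tfrac12\rho_0(x)(u)\cdot\beta_{V_1}(w)$; (A5) $\rho_0(\alpha(x))([w_1,w_2])=[\rho_0(x)(w_1),\beta_{V_1}(w_2)]+[\beta_{V_1}(w_1),\rho_0(x)(w_2)]$; (A6) $\rho_1(\beta(y))(u\cdot w)=\alpha_{V_0}(u)\cdot\rho_1(y)(w)-[\rho_1(y)(u),\beta_{V_1}(w)]$; (A7) $\rho_1(\beta(y))([w_1,w_2])=\beta_{V_1}(w_1)\cdot\rho_1(y)(w_2)-\beta_{V_1}(w_2)\cdot\rho_1(y)(w_1)$. *)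

(* Defs.v *)
From mathcomp Require Import all_boot all_algebra.
Set Implicit Arguments. Unset Strict Implicit. Unset Printing Implicit Defensive.
Import GRing.Theory.
Local Open Scope ring_scope.

Section Defs.
Variable K : fieldType.

Definition linearP {U W : lmodType K} (f : U -> W) : Prop :=
  forall (a : K) (x y : U), f (a *: x + y) = a *: f x + f y.

Definition bilinearP {U1 U2 W : lmodType K} (f : U1 -> U2 -> W) : Prop :=
  (forall z, linearP (fun x => f x z)) /\ (forall x, linearP (f x)).

(* A Hom-Lie antialgebra: even part E, odd part O, even.even product me,
   even.odd product mo (odd.even := even.odd, by supercommutativity),
   odd.odd bracket br with values in E, twisting maps al, be. *)
Definition is_HLAA {E O : lmodType K} (me : E -> E -> E) (mo : E -> O -> O)
  (br : O -> O -> E) (al : E -> E) (be : O -> O) : Prop :=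
  [/\ bilinearP me, bilinearP mo, bilinearP br, linearP al & linearP be] /\
  ((forall x1 x2, me x1 x2 = me x2 x1) /\
      (forall y1 y2, br y1 y2 = - br y2 y1) /\
      (forall x1 x2 x3, me (al x1) (me x2 x3) = me (me x1 x2) (al x3)) /\
      (forall x1 x2 y1, mo (al x1) (mo x2 y1) = 2^-1 *: mo (me x1 x2) (be y1)) /\
      (forall x1 y1 y2, me (al x1) (br y1 y2) = br (mo x1 y1) (be y2) + br (be y1) (mo x1 y2)) /\
      (forall y1 y2 y3, mo (br y2 y3) (be y1) + mo (br y3 y1) (be y2)
                         + mo (br y1 y2) (be y3) = 0)).

Definition is_multiplicative {E O : lmodType K} (me : E -> E -> E) (mo : E -> O -> O)
  (br : O -> O -> E) (al : E -> E) (be : O -> O) : Prop :=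
  [/\ (forall x1 x2, al (me x1 x2) = me (al x1) (al x2)),
      (forall x1 y1, be (mo x1 y1) = mo (al x1) (be y1))
    & (forall y1 y2, al (br y1 y2) = br (be y1) (be y2))].

Definition is_mult_HLAA {E O : lmodType K} (me : E -> E -> E) (mo : E -> O -> O)
  (br : O -> O -> E) (al : E -> E) (be : O -> O) : Prop :=
  is_HLAA me mo br al be /\ is_multiplicative me mo br al be.

(* A representation: rho0 x = (r00 x, r01 x) in Hom(V0,V0) (+) Hom(V1,V1),
   rho1 y = (r10 y, r11 y) in Hom(V0,V1) (+) Hom(V1,V0). *)
Definition is_rep {A0 A1 V0 V1 : lmodType K}
  (ame : A0 -> A0 -> A0) (amo : A0 -> A1 -> A1) (abr : A1 -> A1 -> A0)
  (al : A0 -> A0) (be : A1 -> A1) (aV : V0 -> V0) (bV : V1 -> V1)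
  (r00 : A0 -> V0 -> V0) (r01 : A0 -> V1 -> V1)
  (r10 : A1 -> V0 -> V1) (r11 : A1 -> V1 -> V0) : Prop :=
  [/\ bilinearP r00, bilinearP r01, bilinearP r10 & bilinearP r11] /\
  ((forall x u, aV (r00 x u) = r00 (al x) (aV u)) /\
      (forall x w, bV (r01 x w) = r01 (al x) (bV w)) /\
      (forall y u, bV (r10 y u) = r10 (be y) (aV u)) /\
      (forall y w, aV (r11 y w) = r11 (be y) (bV w)) /\
      (forall x1 x2 u, r00 (al x1) (r00 x2 u) = r00 (ame x1 x2) (aV u)) /\
      (forall x1 x2 w, r01 (al x1) (r01 x2 w) = 2^-1 *: r01 (ame x1 x2) (bV w)) /\
      (forall x y u, r01 (al x) (r10 y u) = 2^-1 *: r10 (be y) (r00 x u)) /\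
      (forall x y u, r10 (amo x y) (aV u) = 2^-1 *: r10 (be y) (r00 x u)) /\
      (forall x y w, r00 (al x) (r11 y w)
                     = r11 (amo x y) (bV w) + r11 (be y) (r01 x w)) /\
      (forall y1 y2 u, r00 (abr y1 y2) (aV u)
                     = r11 (be y1) (r10 y2 u) - r11 (be y2) (r10 y1 u)) /\
      (forall y1 y2 w, r01 (abr y1 y2) (bV w)
                     = - r10 (be y1) (r11 y2 w) + r10 (be y2) (r11 y1 w))).

Definition is_action {A0 A1 V0 V1 : lmodType K}
  (ame : A0 -> A0 -> A0) (amo : A0 -> A1 -> A1) (abr : A1 -> A1 -> A0)
  (al : A0 -> A0) (be : A1 -> A1)
  (vme : V0 -> V0 -> V0) (vmo : V0 -> V1 -> V1) (vbr : V1 -> V1 -> V0)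
  (aV : V0 -> V0) (bV : V1 -> V1)
  (r00 : A0 -> V0 -> V0) (r01 : A0 -> V1 -> V1)
  (r10 : A1 -> V0 -> V1) (r11 : A1 -> V1 -> V0) : Prop :=
  is_rep ame amo abr al be aV bV r00 r01 r10 r11 /\
  ((forall x u1 u2, r00 (al x) (vme u1 u2) = vme (r00 x u1) (aV u2)) /\
      (forall x u w, r01 (al x) (vmo u w) = 2^-1 *: vmo (r00 x u) (bV w)) /\
      (forall y u1 u2, vmo (aV u1) (r10 y u2) = 2^-1 *: r10 (be y) (vme u1 u2)) /\
      (forall x u w, vmo (aV u) (r01 x w) = 2^-1 *: vmo (r00 x u) (bV w)) /\
      (forall x w1 w2, r00 (al x) (vbr w1 w2)
                      = vbr (r01 x w1) (bV w2) + vbr (bV w1) (r01 x w2)) /\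
      (forall y u w, r11 (be y) (vmo u w)
                      = vme (aV u) (r11 y w) - vbr (r10 y u) (bV w)) /\
      (forall y w1 w2, r10 (be y) (vbr w1 w2)
                      = vmo (r11 y w2) (bV w1) - vmo (r11 y w1) (bV w2))).

Section Semidirect.
Variables (A0 A1 V0 V1 : lmodType K)
  (ame : A0 -> A0 -> A0) (amo : A0 -> A1 -> A1) (abr : A1 -> A1 -> A0)
  (al : A0 -> A0) (be : A1 -> A1)
  (vme : V0 -> V0 -> V0) (vmo : V0 -> V1 -> V1) (vbr : V1 -> V1 -> V0)
  (aV : V0 -> V0) (bV : V1 -> V1)
  (r00 : A0 -> V0 -> V0) (r01 : A0 -> V1 -> V1)
  (r10 : A1 -> V0 -> V1) (r11 : A1 -> V1 -> V0).

Definition sd_me (p q : A0 * V0) : A0 * V0 :=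
  (ame p.1 q.1, r00 p.1 q.2 + r00 q.1 p.2 + vme p.2 q.2).
Definition sd_mo (p : A0 * V0) (q : A1 * V1) : A1 * V1 :=
  (amo p.1 q.1, r01 p.1 q.2 + r10 q.1 p.2 + vmo p.2 q.2).
Definition sd_br (p q : A1 * V1) : A0 * V0 :=
  (abr p.1 q.1, r11 p.1 q.2 - r11 q.1 p.2 + vbr p.2 q.2).
Definition sd_al (p : A0 * V0) : A0 * V0 := (al p.1, aV p.2).
Definition sd_be (q : A1 * V1) : A1 * V1 := (be q.1, bV q.2).
End Semidirect.
End Defs.

(* Main.v *)
Require Import Defs.
From mathcomp Require Import all_boot all_algebra.
Set Implicit Arguments. Unset Strict Implicit.
Import GRing.Theory.
Local Open Scope ring_scope.

Section Aux.
Variable K : fieldType.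

Lemma lin0 (U W : lmodType K) (f : U -> W) : Defs.linearP f -> f 0 = 0.
Proof.
move=> H; have := H 1 0 0; rewrite scale1r addr0.
move=> /(congr1 (fun v => v - f 0)); rewrite addrK subrr scale1r => E; exact: esym E.
Qed.
Lemma linD (U W : lmodType K) (f : U -> W) : Defs.linearP f -> forall x y, f (x + y) = f x + f y.
Proof. by move=> H x y; have := H 1 x y; rewrite !scale1r. Qed.
Lemma linN (U W : lmodType K) (f : U -> W) : Defs.linearP f -> forall x, f (- x) = - f x.
Proof. by move=> H x; have := H (-1) x 0; rewrite (lin0 H) !addr0 !scaleN1r. Qed.
Lemma linZ (U W : lmodType K) (f : U -> W) : Defs.linearP f -> forall a x, f (a *: x) = a *: f x.
Proof. by move=> H a x; have := H a x 0; rewrite (lin0 H) !addr0. Qed.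

Section Bil.
Variables (U1 U2 W : lmodType K) (f : U1 -> U2 -> W) (H : bilinearP f).
Lemma bilDl x y z : f (x + y) z = f x z + f y z.
Proof. exact: (linD (H.1 z)). Qed.
Lemma bilNl x z : f (- x) z = - f x z.
Proof. exact: (linN (H.1 z)). Qed.
Lemma bilZl a x z : f (a *: x) z = a *: f x z.
Proof. exact: (linZ (H.1 z)). Qed.
Lemma bilDr x y z : f z (x + y) = f z x + f z y.
Proof. exact: (linD (H.2 z)). Qed.
Lemma bilNr x z : f z (- x) = - f z x.
Proof. exact: (linN (H.2 z)). Qed.
Lemma bilZr a x z : f z (a *: x) = a *: f z x.
Proof. exact: (linZ (H.2 z)). Qed.
End Bil.

Lemma canc (V : zmodType) (s a na s3 : V) :
  a + na = 0 -> s = s3 + na -> s3 = 0 -> s + a = 0.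
Proof. by move=> H1 -> ->; rewrite add0r addrC. Qed.
Lemma pull_base (V : zmodType) (a : V) : a = 0 + a.
Proof. by rewrite add0r. Qed.
Lemma pull_step (V : zmodType) (x y x' a : V) : x = x' + a -> x + y = (x' + y) + a.
Proof. by move=> ->; rewrite addrAC. Qed.
Lemma fstZ (U W : lmodType K) a (p : U * W) : (a *: p).1 = a *: p.1. Proof. by []. Qed.
Lemma sndZ (U W : lmodType K) a (p : U * W) : (a *: p).2 = a *: p.2. Proof. by []. Qed.
Lemma fstD (U W : lmodType K) (p q : U * W) : (p + q).1 = p.1 + q.1. Proof. by []. Qed.
Lemma sndD (U W : lmodType K) (p q : U * W) : (p + q).2 = p.2 + q.2. Proof. by []. Qed.
Lemma fstN (U W : lmodType K) (p : U * W) : (- p).1 = - p.1. Proof. by []. Qed.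
Lemma sndN (U W : lmodType K) (p : U * W) : (- p).2 = - p.2. Proof. by []. Qed.
Lemma fst0 (U W : lmodType K) : (0 : U * W).1 = 0. Proof. by []. Qed.
Lemma snd0 (U W : lmodType K) : (0 : U * W).2 = 0. Proof. by []. Qed.
Lemma pairE (U W : Type) (p q : U * W) : p.1 = q.1 -> p.2 = q.2 -> p = q.
Proof. by case: p q => [a b] [c d] /= -> ->. Qed.
End Aux.

Ltac pull :=
  lazymatch goal with
  | |- ?x + ?y = _ + ?a => first [ unify y a; reflexivity | apply: pull_step; pull ]
  | |- ?y = _ + ?a => unify y a; apply: pull_base
  end.

Ltac cancel0 :=
  lazymatch goal with
  | |- 0 = 0 => reflexivity
  | |- ?s + 0 = 0 => rewrite addr0; cancel0
  | |- 0 + ?s = 0 => rewrite add0r; cancel0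
  | |- ?s + (- ?t) = 0 => apply: (@canc _ s (- t) t); [by rewrite addNr | pull | cancel0]
  | |- ?s + ?t = 0 => apply: (@canc _ s t (- t)); [by rewrite addrN | pull | cancel0]
  end.

Ltac zsolve := apply/eqP; rewrite -subr_eq0; apply/eqP;
  rewrite ?opprD ?opprK ?addrA; cancel0.


Ltac ex1 :=
  match goal with
  | H : bilinearP _ |- _ => progress rewrite ?(bilDl H) ?(bilDr H) ?(bilNl H) ?(bilNr H) ?(bilZl H) ?(bilZr H)
  | H : Defs.linearP _ |- _ => progress rewrite ?(linD H) ?(linN H) ?(linZ H)
  | |- _ => progress rewrite ?scalerDr ?scalerN ?opprD ?opprK ?fstZ ?sndZ ?fstD ?sndD ?fstN ?sndN ?fst0 ?snd0 /=
  end.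
Ltac ex := repeat ex1.

Theorem theorem3p4 (K : fieldType) (two_neq0 : (2%:R : K) != 0)
  (A0 A1 V0 V1 : lmodType K)
  (ame : A0 -> A0 -> A0) (amo : A0 -> A1 -> A1) (abr : A1 -> A1 -> A0)
  (al : A0 -> A0) (be : A1 -> A1)
  (vme : V0 -> V0 -> V0) (vmo : V0 -> V1 -> V1) (vbr : V1 -> V1 -> V0)
  (aV : V0 -> V0) (bV : V1 -> V1)
  (r00 : A0 -> V0 -> V0) (r01 : A0 -> V1 -> V1)
  (r10 : A1 -> V0 -> V1) (r11 : A1 -> V1 -> V0) :
  is_mult_HLAA ame amo abr al be ->
  is_mult_HLAA vme vmo vbr aV bV ->
  is_action ame amo abr al be vme vmo vbr aV bV r00 r01 r10 r11 ->
  is_mult_HLAA (sd_me ame vme r00) (sd_mo amo vmo r01 r10) (sd_br abr vbr r11)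
    (sd_al al aV) (sd_be be bV).
Proof.
move=> [[[BAme BAmo BAbr LAal LAbe] [CA [SA [A1a [A2a [A3a A4a]]]]]] [MA1 MA2 MA3]].
move=> [[[BVme BVmo BVbr LVal LVbe] [CV [SV [A1v [A2v [A3v A4v]]]]]] [MV1 MV2 MV3]].
move=> [[[B00 B01 B10 B11] [R1 [R2 [R3 [R4 [R5 [R6 [R7 [R8 [R9 [R10 R11]]]]]]]]]]]
  [X1 [X2 [X3 [X4 [X5 [X6 X7]]]]]]].
split; [split; [split|]|].
- split=> [[z1 z2]|[z1 z2]] a [x1 u1] [x2 u2]; rewrite /sd_me /=; congr (_, _); ex; zsolve.
- split=> [[z1 z2]|[z1 z2]] a [x1 u1] [x2 u2]; rewrite /sd_mo /=; congr (_, _); ex; zsolve.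
- split=> [[z1 z2]|[z1 z2]] a [x1 u1] [x2 u2]; rewrite /sd_br /=; congr (_, _); ex; zsolve.
- move=> a [x1 u1] [x2 u2]; rewrite /sd_al /=; congr (_, _); ex; zsolve.
- move=> a [x1 u1] [x2 u2]; rewrite /sd_be /=; congr (_, _); ex; zsolve.
have key : forall x u v, vme (aV u) (r00 x v) = vme (r00 x u) (aV v).
  by move=> x u v; rewrite CV -X1 CV X1.
- split; [|split; [|split; [|split; [|split]]]].
  + move=> [x1 u1] [x2 u2]; apply: pairE; rewrite /sd_me /=; first exact: CA.
    rewrite (CV u1 u2); zsolve.
  + move=> [y1 w1] [y2 w2]; apply: pairE; rewrite /sd_br; ex; first exact: SA.
    rewrite (SV w1 w2); ex; zsolve.
  + move=> [x1 u1] [x2 u2] [x3 u3]; apply: pairE; rewrite /sd_me /sd_al /=; first exact: A1a.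
    ex; rewrite !R5 !X1 !key A1v (CA x3 x1) (CA x3 x2); zsolve.
  + move=> [x1 u1] [x2 u2] [y w]; apply: pairE; rewrite /sd_me /sd_mo /sd_al /sd_be; ex;
      first exact: A2a.
    rewrite !R6 !R7 !R8 !X2 !X4 !X3 A2v; ex; zsolve.
  + move=> [x u] [y1 w1] [y2 w2]; apply: pairE; rewrite /sd_me /sd_mo /sd_al /sd_be /sd_br; ex;
      first exact: A3a.
    rewrite !R9 X5 R10 A3v !X6 (SV (bV w1) (r10 y2 u)); ex; zsolve.
  + move=> [y1 w1] [y2 w2] [y3 w3]; apply: pairE; rewrite /sd_mo /sd_be /sd_br; ex;
      first exact: A4a.
    rewrite !R11 !X7 -(A4v w1 w2 w3); ex; zsolve.
- split.
  + move=> [x1 u1] [x2 u2]; apply: pairE; rewrite /sd_me /sd_al; ex; first exact: MA1.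
    rewrite !R1 MV1; zsolve.
  + move=> [x1 u1] [y w]; apply: pairE; rewrite /sd_mo /sd_al /sd_be; ex; first exact: MA2.
    rewrite R2 R3 MV2; zsolve.
  + move=> [y1 w1] [y2 w2]; apply: pairE; rewrite /sd_br /sd_be /sd_al; ex; first exact: MA3.
    rewrite !R4 MV3; zsolve.
Qed.
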